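(* Let $W=\mathfrak{S}_n$, $\ast=\mathrm{id}$, $w\in I_\ast$, and let $(s_a,s_b,w)$ be a reduced sequence with $|a-b|>1$. Then one of the following holds: (a) $s_aw\ne ws_a$, $s_bs_aws_a\neq s_aws_as_b$, $s_bw\ne ws_b$, $s_as_bws_b\neq s_bws_bs_a$; (b) $s_aw=ws_a$, $s_bs_aw\ne s_aws_b$, $s_bw\neq ws_b$, $s_as_bws_b=s_bws_bs_a$; (c) $s_aw\neq ws_a$, $s_bs_aws_a=s_aws_as_b$, $s_bw=ws_b$, $s_as_bw\neq s_bws_a$; (d) $s_aw=ws_a$, $s_bs_aw=s_aws_b$, $s_bw=ws_b$, $s_as_bw=s_bws_a$.
   Context: $\mathfrak{S}_n$ with $s_i=(i,i+1)$; $I_\ast=\{w\in\mathfrak{S}_n:w^2=1\}$. For a simple transposition $s$ and $w\in I_\ast$: $s\ltimes w=sw$ if $sw=ws$, $s\ltimes w=sws$ otherwise; iterated from the right. $\rho(w)$ is the minimal $k$ with $w=s_{i_1}\ltimes\cdots\ltimes s_{i_k}\ltimes1$. The sequence $(s_a,s_b,w)$ is reduced if $\rho(s_a\ltimes s_b\ltimes w)=\rho(w)+2$. *)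

(* Defs.v *)
From mathcomp Require Import all_boot all_fingroup.
Set Implicit Arguments. Unset Strict Implicit. Unset Printing Implicit Defensive.
Local Open Scope group_scope.

(* Paper's product in the symmetric group: (p ⊙ q) = p ∘ q, i.e. apply q first.
   MathComp's [p * q] applies p first, so p ⊙ q := q * p. *)
Definition pcomp (m : nat) (p q : 'S_m) : 'S_m := q * p.
Infix "⊙" := pcomp (at level 40, left associativity).

(* W = S_{n+1} acting on {0,...,n}; simple transpositions s_i = (i, i+1), i < n. *)
Definition s (n i : nat) : 'S_n.+1 := tperm (inord i) (inord i.+1).

Definition invol (m : nat) (w : 'S_m) : bool := w ⊙ w == 1.

Definition ltimes (m : nat) (t w : 'S_m) : 'S_m :=
  if t ⊙ w == w ⊙ t then t ⊙ w else t ⊙ w ⊙ t.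

Definition twword (n : nat) (l : seq nat) : 'S_n.+1 :=
  foldr (fun i x => ltimes (s n i) x) 1 l.

Definition expressible (n : nat) (w : 'S_n.+1) (k : nat) : Prop :=
  exists l : seq nat, [/\ size l = k, all (fun i => i < n) l & w = twword n l].

Definition rho_is (n : nat) (w : 'S_n.+1) (k : nat) : Prop :=
  expressible w k /\ forall j, expressible w j -> k <= j.

Definition reduced (n a b : nat) (w : 'S_n.+1) : Prop :=
  exists k, rho_is w k /\ rho_is (ltimes (s n a) (ltimes (s n b) w)) (k + 2).

(* Main.v *)
Require Import Defs.
From mathcomp Require Import all_boot all_fingroup.
Local Open Scope group_scope.
From mathcomp Require Import zify.
Section GG.
Variable gT : finGroupType.
Implicit Types x y w : gT.
Lemma keyc x y w : x * x = 1 -> x * y = y * x ->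
  (x * w * x * y = y * (x * w * x) <-> w * y = y * w).
Proof.
move=> xx xy.
have e1 : x * w * x * y = x * (w * y) * x by rewrite -!mulgA xy.
have e2 : y * (x * w * x) = x * (y * w) * x by rewrite !mulgA xy.
rewrite e1 e2; split; last by move->.
by move/mulIg/mulgI.
Qed.
Lemma main x y w : x * x = 1 -> y * y = 1 -> x * y = y * x ->
 [/\ w * x <> x * w, x * w * x * y <> y * (x * w * x), w * y <> y * w & y * w * y * x <> x * (y * w * y)] \/
 [/\ w * x = x * w, w * x * y <> y * w * x, w * y <> y * w & y * w * y * x = x * (y * w * y)] \/
 [/\ w * x <> x * w, x * w * x * y = y * (x * w * x), w * y = y * w & w * y * x <> x * w * y] \/
 [/\ w * x = x * w, w * x * y = y * w * x, w * y = y * w & w * y * x = x * w * y].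
Proof.
move=> xx yy xy.
have yx := esym xy.
case: (eqVneq (w*x) (x*w)) => A; case: (eqVneq (w*y) (y*w)) => B.
- right; right; right; split=> //; try by move/eqP; rewrite ?(negbTE A) ?(negbTE B).
    by rewrite -mulgA xy mulgA B.
  by rewrite -mulgA yx mulgA A.
- right; left; split=> //; try by move/eqP; rewrite ?(negbTE A) ?(negbTE B).
    move=> E; move: B; suff -> : w * y = y * w by rewrite eqxx.
    apply: (mulgI x); rewrite mulgA -A E -[y * w * x]mulgA A [y * (x * w)]mulgA yx -mulgA //.
  have cxw : commute x w by rewrite /commute A.
  by symmetry; apply: commuteM; [apply: commuteM|].
- right; right; left; split=> //; try by move/eqP; rewrite ?(negbTE A) ?(negbTE B).
    by apply/keyc.
  move=> E; move: A; suff -> : w * x = x * w by rewrite eqxx.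
    apply: (mulgI y); rewrite mulgA -B E -[x * w * y]mulgA B [x * (y * w)]mulgA xy -mulgA //.
- left; split=> //; try by move/eqP; rewrite ?(negbTE A) ?(negbTE B).
    by move/(@keyc _ _ w xx xy)=> E; move: B; rewrite E eqxx.
  by move/(@keyc _ _ w yy yx)=> E; move: A; rewrite E eqxx.
Qed.
End GG.
Lemma s_comm n a b : a < n -> b < n -> (a.+1 < b) || (b.+1 < a) ->
  s n a * s n b = s n b * s n a.
Proof.
move=> ha hb hab.
have h : s n b ^ s n a = s n b.
rewrite /s tpermJ.
have ne : forall i j, i <= n -> j <= n -> i != j -> (inord i : 'I_n.+1) != inord j.
  move=> i j hi hj; apply: contra => /eqP /(congr1 (@nat_of_ord _)).
  by rewrite !inordK //= => ->.
by rewrite !tpermD //; apply: ne => //; lia.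
by rewrite [RHS]conjgC h.
Qed.
Theorem corollary2p15 (n a b : nat) (w : 'S_n.+1) :
  a < n -> b < n -> invol w -> reduced a b w ->
  ((a.+1 < b) || (b.+1 < a)) ->
  let sa := s n a in let sb := s n b in
  [/\ sa ⊙ w <> w ⊙ sa, sb ⊙ sa ⊙ w ⊙ sa <> sa ⊙ w ⊙ sa ⊙ sb,
      sb ⊙ w <> w ⊙ sb & sa ⊙ sb ⊙ w ⊙ sb <> sb ⊙ w ⊙ sb ⊙ sa] \/
  [/\ sa ⊙ w = w ⊙ sa, sb ⊙ sa ⊙ w <> sa ⊙ w ⊙ sb,
      sb ⊙ w <> w ⊙ sb & sa ⊙ sb ⊙ w ⊙ sb = sb ⊙ w ⊙ sb ⊙ sa] \/
  [/\ sa ⊙ w <> w ⊙ sa, sb ⊙ sa ⊙ w ⊙ sa = sa ⊙ w ⊙ sa ⊙ sb,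
      sb ⊙ w = w ⊙ sb & sa ⊙ sb ⊙ w <> sb ⊙ w ⊙ sa] \/
  [/\ sa ⊙ w = w ⊙ sa, sb ⊙ sa ⊙ w = sa ⊙ w ⊙ sb,
      sb ⊙ w = w ⊙ sb & sa ⊙ sb ⊙ w = sb ⊙ w ⊙ sa].
Proof.
move=> ha hb _ _ hab sa sb.
have xy := @s_comm n a b ha hb hab.
have xx : sa * sa = 1 by rewrite /sa /s tperm2.
have yy : sb * sb = 1 by rewrite /sb /s tperm2.
have := @main _ sa sb w xx yy xy.
by rewrite /Defs.pcomp !mulgA.
Qed.
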